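(* Let $a,b,\alpha,\beta$ be variables and let $n\ge 1$ be a natural number. There exist polynomials in $a,b,\alpha,\beta$ with integer coefficients, denoted $\Psi\left(\begin{array}{cc|c} a & b & n \\ \alpha & \beta & r \end{array}\right)$ for $0\le r\le \lfloor n/2\rfloor$ and $\Phi\left(\begin{array}{cc|c} a & b & n \\ \alpha & \beta & r \end{array}\right)$ for $0\le r\le \lfloor (n-1)/2\rfloor$, depending only on $a,b,\alpha,\beta,n,r$, such that the following polynomial identities in $x,y$ hold: \[ (\beta a-\alpha b)^{\lfloor n/2\rfloor}\frac{x^n+y^n}{(x+y)^{\delta(n)}}=\sum_{r=0}^{\lfloor n/2\rfloor}\Psi\left(\begin{array}{cc|c} a & b & n \\ \alpha & \beta & r \end{array}\right)(\alpha x^2+\beta xy+\alpha y^2)^{\lfloor n/2\rfloor-r}(ax^2+bxy+ay^2)^r, \] \[ (\beta a-\alpha b)^{\lfloor (n-1)/2\rfloor}\frac{x^n-y^n}{(x-y)(x+y)^{\delta(n-1)}}=\sum_{r=0}^{\lfloor (n-1)/2\rfloor}\Phi\left(\begin{array}{cc|c} a & b & n \\ \alpha & \beta & r \end{array}\right)(\alpha x^2+\beta xy+\alpha y^2)^{\lfloor (n-1)/2\rfloor-r}(ax^2+bxy+ay^2)^r. \]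
   Context: $\delta(m)=1$ if $m$ is odd and $\delta(m)=0$ if $m$ is even; $\lfloor m/2\rfloor$ is the largest integer $\le m/2$. Note $\frac{x^n+y^n}{(x+y)^{\delta(n)}}$ and $\frac{x^n-y^n}{(x-y)(x+y)^{\delta(n-1)}}$ are polynomials in $x,y$. *)

(* Defs.v *)
From HB Require Import structures.
From mathcomp Require Import all_boot all_order all_algebra.
From mathcomp Require Import mpoly.
Set Implicit Arguments. Unset Strict Implicit. Unset Printing Implicit Defensive.
Import GRing.Theory.
Local Open Scope ring_scope.

Definition V6 (k : nat) : {mpoly int[6]} := 'X_(inord k).
Definition va := V6 0.
Definition vb := V6 1.
Definition valpha := V6 2.
Definition vbeta := V6 3.
Definition vx := V6 4.
Definition vy := V6 5.

Definition lift4 (p : {mpoly int[4]}) : {mpoly int[6]} :=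
  p \mPo [tuple va; vb; valpha; vbeta].

Definition Qalpha : {mpoly int[6]} := valpha * vx ^+ 2 + vbeta * vx * vy + valpha * vy ^+ 2.
Definition Qa : {mpoly int[6]} := va * vx ^+ 2 + vb * vx * vy + va * vy ^+ 2.
Definition Delta : {mpoly int[6]} := vbeta * va - valpha * vb.

(* Main.v *)
Require Import Defs.
From HB Require Import structures.
From mathcomp Require Import all_boot all_order all_algebra.
From mathcomp Require Import mpoly.
From mathcomp Require Import ring.
Import GRing.Theory.
Local Open Scope ring_scope.
Set Implicit Arguments. Unset Strict Implicit.

Lemma lift4D p q : lift4 (p + q) = lift4 p + lift4 q.
Proof. by rewrite /lift4 comp_mpolyD. Qed.
Lemma lift4M p q : lift4 (p * q) = lift4 p * lift4 q.
Proof. by rewrite /lift4 rmorphM. Qed.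
Lemma lift4N p : lift4 (- p) = - lift4 p.
Proof. by rewrite /lift4 comp_mpolyN. Qed.
Lemma lift4_0 : lift4 0 = 0.
Proof. by rewrite /lift4 comp_mpoly0. Qed.
Lemma lift4_1 : lift4 1 = 1.
Proof. by rewrite /lift4 comp_mpoly1. Qed.
Lemma lift4X (i : nat) : (i < 4)%N -> lift4 'X_(inord i) = V6 i.
Proof.
move=> hi; rewrite /lift4 comp_mpolyXU inordK //.
by case: i hi => [|[|[|[|]]]].
Qed.

Definition Srep (m : nat) (X : {mpoly int[6]}) := exists c : nat -> {mpoly int[4]},
  X = \sum_(r < m.+1) lift4 (c r) * Qalpha ^+ (m - r) * Qa ^+ r.

Lemma S0 m : Srep m 0.
Proof. exists (fun _ => 0); rewrite big1 // => i _; by rewrite lift4_0 !mul0r. Qed.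
Lemma Sc p : Srep 0 (lift4 p).
Proof. exists (fun _ => p); by rewrite big_ord1 /= !expr0 !mulr1. Qed.
Lemma SD m X Y : Srep m X -> Srep m Y -> Srep m (X + Y).
Proof.
move=> [c ->] [d ->]; exists (fun r => c r + d r); rewrite -big_split /=.
by apply: eq_bigr => i _; rewrite lift4D !mulrDl.
Qed.
Lemma SM m p X : Srep m X -> Srep m (lift4 p * X).
Proof.
move=> [c ->]; exists (fun r => p * c r); rewrite mulr_sumr.
by apply: eq_bigr => i _; rewrite lift4M !mulrA.
Qed.
Lemma SN m X : Srep m X -> Srep m (- X).
Proof.
move=> h; have := SM (-1) h; by rewrite lift4N lift4_1 mulN1r.
Qed.
Lemma SB m X Y : Srep m X -> Srep m Y -> Srep m (X - Y).
Proof. move=> h1 h2; exact: (SD h1 (SN h2)). Qed.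
Lemma SQalpha m X : Srep m X -> Srep m.+1 (Qalpha * X).
Proof.
move=> [c ->]; exists (fun r => if (r <= m)%N then c r else 0).
rewrite [RHS]big_ord_recr /= ltnn lift4_0 !mul0r addr0 mulr_sumr.
apply: eq_bigr => i _ /=.
have hi : (i <= m)%N by rewrite -ltnS.
rewrite hi subSn // exprS; ring.
Qed.
Lemma SQa m X : Srep m X -> Srep m.+1 (Qa * X).
Proof.
move=> [c ->]; exists (fun r => if r is r'.+1 then c r' else 0).
rewrite [RHS]big_ord_recl /= lift4_0 !mul0r add0r mulr_sumr.
apply: eq_bigr => i _ /=; rewrite /bump /= add1n subSS exprS; ring.
Qed.

Lemma Srep_eq m X Y : X = Y -> Srep m Y -> Srep m X.
Proof. by move=> ->. Qed.

Definition U6 : {mpoly int[6]} := vx ^+ 2 + vy ^+ 2.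
Definition V6' : {mpoly int[6]} := vx * vy.

Fixpoint Wp (w0 w1 : {mpoly int[6]}) (m : nat) : {mpoly int[6]} * {mpoly int[6]} :=
  match m with
  | 0 => (w0, w1)
  | m'.+1 => let p := Wp w0 w1 m' in (p.2, U6 * p.2 - V6' ^+ 2 * p.1)
  end.
Definition W w0 w1 m := (Wp w0 w1 m).1.

Lemma W0 w0 w1 : W w0 w1 0 = w0. Proof. by []. Qed.
Lemma W1 w0 w1 : W w0 w1 1 = w1. Proof. by []. Qed.
Lemma Wrec w0 w1 m : W w0 w1 m.+2 = U6 * W w0 w1 m.+1 - V6' ^+ 2 * W w0 w1 m.
Proof. by []. Qed.

Lemma Wclosed L A B w0 w1 : L * w0 = A + B -> L * w1 = A * vx ^+ 2 + B * vy ^+ 2 ->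
  forall m, L * W w0 w1 m = A * (vx ^+ 2) ^+ m + B * (vy ^+ 2) ^+ m.
Proof.
move=> h0 h1.
suff H : forall m, L * W w0 w1 m = A * (vx ^+ 2) ^+ m + B * (vy ^+ 2) ^+ m /\
   L * W w0 w1 m.+1 = A * (vx ^+ 2) ^+ m.+1 + B * (vy ^+ 2) ^+ m.+1.
  by move=> m; case: (H m).
elim=> [|m [IH0 IH1]]; first by rewrite W0 W1 h0 h1 !expr0 !expr1 !mulr1.
split=> //.
have -> : L * W w0 w1 m.+2 = U6 * (L * W w0 w1 m.+1) - V6' ^+ 2 * (L * W w0 w1 m).
  rewrite Wrec; ring.
rewrite IH0 IH1 !exprS /U6 /V6'.
set P := (vx ^+ 2) ^+ m; set Q := (vy ^+ 2) ^+ m; ring.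
Qed.

Lemma DeltaU : Delta * U6 = lift4 'X_(inord 3) * (Qa * 1) - lift4 'X_(inord 1) * (Qalpha * 1).
Proof. rewrite !lift4X // /Delta /U6 /Qa /Qalpha; rewrite -/va -/vb -/valpha -/vbeta; ring. Qed.
Lemma DeltaV : Delta * V6' = lift4 'X_(inord 0) * (Qalpha * 1) - lift4 'X_(inord 2) * (Qa * 1).
Proof. rewrite !lift4X // /Delta /V6' /Qa /Qalpha; rewrite -/va -/vb -/valpha -/vbeta; ring. Qed.

Lemma Wrep c0 e m : Srep m (Delta ^+ m * W (lift4 c0) (U6 + lift4 e * V6') m).
Proof.
set w0 := lift4 c0; set w1 := U6 + lift4 e * V6'.
suff H : forall m, Srep m (Delta ^+ m * W w0 w1 m) /\ Srep m.+1 (Delta ^+ m.+1 * W w0 w1 m.+1).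
  by case: (H m).
have S1 := Sc 1; rewrite lift4_1 in S1; clear m.
elim=> [|m [IH0 IH1]].
  split; first by rewrite expr0 mul1r W0; apply: Sc.
  rewrite expr1 W1.
  apply: (Srep_eq (Y := Delta * U6 + lift4 e * (Delta * V6'))); first by rewrite /w1; ring.
  rewrite DeltaU DeltaV.
  apply: SD; first by apply: SB; apply: SM; [apply: SQa | apply: SQalpha].
  by apply: SM; apply: SB; apply: SM; [apply: SQalpha | apply: SQa].
split=> //.
set Y0 := Delta ^+ m * W w0 w1 m; set Y1 := Delta ^+ m.+1 * W w0 w1 m.+1.
have -> : Delta ^+ m.+2 * W w0 w1 m.+2 = (Delta * U6) * Y1 - (Delta * V6') * ((Delta * V6') * Y0).
  rewrite /Y0 /Y1 Wrec !exprS; set P := Delta ^+ m; set A := W w0 w1 m; set B := W w0 w1 m.+1.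
  ring.
rewrite DeltaU DeltaV.
set l0 := lift4 'X_(inord 0); set l1 := lift4 'X_(inord 1);
set l2 := lift4 'X_(inord 2); set l3 := lift4 'X_(inord 3).
set Z := l0 * (Qalpha * Y0) - l2 * (Qa * Y0).
have HZ : Srep m.+1 Z by apply: SB; apply: SM; [apply: SQalpha | apply: SQa].
apply: (Srep_eq (Y := (l3 * (Qa * Y1) - l1 * (Qalpha * Y1)) - (l0 * (Qalpha * Z) - l2 * (Qa * Z)))).
  rewrite /Z; clear HZ Z; clearbody l0 l1 l2 l3 Y0 Y1; move: l0 l1 l2 l3 Y0 Y1 Qa Qalpha; clear; move=> *; ring.
apply: SB; apply: SB; apply: SM; by [apply: SQa | apply: SQalpha].
Qed.

Definition ev6 : 'I_6 -> int := fun i => ((val i == 4)%N)%:R.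
Lemma ev_x : meval ev6 vx = 1.
Proof. by rewrite /vx /V6 mevalXU /ev6 /= inordK. Qed.
Lemma ev_y : meval ev6 vy = 0.
Proof. by rewrite /vy /V6 mevalXU /ev6 /= (@inordK 5 5). Qed.
Lemma xpy_neq0 : vx + vy != 0.
Proof. apply/eqP=> h; have := congr1 (meval ev6) h; by rewrite mevalD ev_x ev_y meval0. Qed.
Lemma xmy_neq0 : vx - vy != 0.
Proof. apply/eqP=> h; have := congr1 (meval ev6) h; by rewrite mevalB ev_x ev_y meval0. Qed.

Lemma expr_double (z : {mpoly int[6]}) m : z ^+ (m.*2) = (z ^+ 2) ^+ m.
Proof. by rewrite -muln2 mulnC exprM. Qed.

Lemma final L A B c0 e m : L != 0 -> L * lift4 c0 = A + B ->
  L * (U6 + lift4 e * V6') = A * vx ^+ 2 + B * vy ^+ 2 ->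
  exists c : nat -> {mpoly int[4]}, forall q, L * q = A * (vx ^+ 2) ^+ m + B * (vy ^+ 2) ^+ m ->
  Delta ^+ m * q = \sum_(r < m.+1) lift4 (c r) * Qalpha ^+ (m - r) * Qa ^+ r.
Proof.
move=> hL h0 h1; have [c hc] := Wrep c0 e m; exists c => q hq.
rewrite -hc; congr (_ * _); apply: (mulfI hL); rewrite hq.
by rewrite (Wclosed h0 h1).
Qed.

Lemma ringE6 (R : comRingType) (x y : R) :
  ((x - y) * (x + y) = x ^+ 2 - y ^+ 2) /\
  ((x + y) * (x ^+ 2 + y ^+ 2 - x * y) = x * x ^+ 2 + y * y ^+ 2) /\
  ((x - y) * (x ^+ 2 + y ^+ 2 + x * y) = x * x ^+ 2 - y * y ^+ 2) /\
  ((x - y) * (x + y) * (x ^+ 2 + y ^+ 2) = x ^+ 2 * x ^+ 2 - y ^+ 2 * y ^+ 2).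
Proof. split; [ring | split; [ring | split; ring]]. Qed.

Theorem theorem3p1 (n : nat) (hn : (1 <= n)%N) :
  exists Psi Phi : nat -> {mpoly int[4]},
    (forall q : {mpoly int[6]},
        (vx + vy) ^+ (odd n) * q = vx ^+ n + vy ^+ n ->
        Delta ^+ n./2 * q =
        \sum_(r < n./2.+1) lift4 (Psi r) * Qalpha ^+ (n./2 - r) * Qa ^+ r)
    /\
    (forall q : {mpoly int[6]},
        (vx - vy) * (vx + vy) ^+ (odd n.-1) * q = vx ^+ n - vy ^+ n ->
        Delta ^+ (n.-1)./2 * q =
        \sum_(r < (n.-1)./2.+1) lift4 (Phi r) * Qalpha ^+ ((n.-1)./2 - r) * Qa ^+ r).
Proof.
have [E1 [E2 [E3 E4]]] := ringE6 vx vy.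
have hn1 : n = (odd n + n./2.*2)%N by rewrite odd_double_half.
case: n hn hn1 => [//|k] _ hn1.
have hk1 : k = (odd k + k./2.*2)%N by rewrite odd_double_half.
have [Psi hPsi] : exists Psi : nat -> {mpoly int[4]}, forall q : {mpoly int[6]},
        (vx + vy) ^+ (odd k.+1) * q = vx ^+ k.+1 + vy ^+ k.+1 ->
        Delta ^+ k.+1./2 * q =
        \sum_(r < k.+1./2.+1) lift4 (Psi r) * Qalpha ^+ (k.+1./2 - r) * Qa ^+ r.
  move: hn1; set N := k.+1; set m := N./2; case: (odd N) => /= hN.
  - have h0 : (vx + vy) * lift4 1 = vx + vy by rewrite lift4_1 mulr1.
    have h1 : (vx + vy) * (U6 + lift4 (-1) * V6') = vx * vx ^+ 2 + vy * vy ^+ 2.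
      by rewrite lift4N lift4_1 mulN1r -E2 /U6 /V6'.
    have [c hc] := final m xpy_neq0 h0 h1.
    exists c => q hq; apply: hc; rewrite -[X in X * q]expr1 hq hN add1n !(exprS _ m.*2) !expr_double.
    by [].
  - have h0 : 1 * lift4 (1 + 1) = 1 + 1 by rewrite mul1r lift4D lift4_1.
    have h1 : 1 * (U6 + lift4 0 * V6') = 1 * vx ^+ 2 + 1 * vy ^+ 2.
      by rewrite lift4_0 mul0r addr0 !mul1r.
    have [c hc] := final m (oner_neq0 _) h0 h1.
    exists c => q hq; apply: hc; rewrite -[X in X * q](expr0 (vx + vy)) hq hN add0n !expr_double.
    by rewrite !mul1r.
have [Phi hPhi] : exists Phi : nat -> {mpoly int[4]}, forall q : {mpoly int[6]},
        (vx - vy) * (vx + vy) ^+ (odd k) * q = vx ^+ k.+1 - vy ^+ k.+1 ->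
        Delta ^+ k./2 * q =
        \sum_(r < k./2.+1) lift4 (Phi r) * Qalpha ^+ (k./2 - r) * Qa ^+ r.
  move: hk1; set m := k./2; case: (odd k) => /= hK.
  - have h0 : (vx - vy) * (vx + vy) * lift4 1 = vx ^+ 2 + - vy ^+ 2 by rewrite lift4_1 mulr1 E1.
    have h1 : (vx - vy) * (vx + vy) * (U6 + lift4 0 * V6') = vx ^+ 2 * vx ^+ 2 + - vy ^+ 2 * vy ^+ 2.
      by rewrite lift4_0 mul0r addr0 E4 /U6 mulNr.
    have [c hc] := final m (mulf_neq0 xmy_neq0 xpy_neq0) h0 h1.
    exists c => q hq; apply: hc; rewrite -[X in _ * X * q](expr1 (vx + vy)) hq hK add1n.
    rewrite -!doubleS !expr_double !(exprS _ m) mulNr.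
    by [].
  - have h0 : (vx - vy) * lift4 1 = vx + - vy by rewrite lift4_1 mulr1.
    have h1 : (vx - vy) * (U6 + lift4 1 * V6') = vx * vx ^+ 2 + - vy * vy ^+ 2.
      by rewrite lift4_1 mul1r E3 /U6 /V6' mulNr.
    have [c hc] := final m xmy_neq0 h0 h1.
    exists c => q hq; apply: hc; rewrite -[X in X * q](mulr1 (vx - vy)) -[X in _ * X * q](expr0 (vx + vy)) hq hK add0n.
    rewrite !(exprS _ m.*2) !expr_double mulNr.
    by [].
by exists Psi, Phi.
Qed.
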